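(* If a sequent without stoups (i.e. all of whose stoups are empty) is derivable in $\mathcal{M}_{2018}$, then it is also derivable in $\mathcal{F}_{2018}$.
   Context: Formulae are built from a countable set of variables and $\mathbf1$ by $\backslash,/,\cdot,\wedge,\vee$ and the unary $\langle\rangle$, $[]^{-1}$, $!$. A stoup is a finite multiset of formulae ($\varnothing$ empty); a tree term is a formula or $[\Xi]$; a meta-formula is $\zeta;\Gamma$ ($\zeta$ a stoup, $\Gamma$ a finite sequence of tree terms, empty $\Lambda$), $\varnothing;\Gamma$ written $\Gamma$; comma is concatenation / multiset union; sequents $\Xi\to C$; $\Xi(\Theta)$ designates an occurrence of a meta-formula $\Theta$ which is $\Xi$ itself or the content of a bracket $[\Theta]$ at any depth. Rules of $\mathcal{M}_{2018}$ (Morrill's calculus; no cut rule): axioms $A\to A$, $\Lambda\to\mathbf1$; ($/L$) from $\zeta_1;\Gamma\to B$ and $\Xi(\zeta_2;\Delta_1,C,\Delta_2)\to D$ infer $\Xi(\zeta_1,\zeta_2;\Delta_1,C/B,\Gamma,\Delta_2)\to D$; ($/R$) from $\zeta;\Gamma,B\to C$ infer $\zeta;\Gamma\to C/B$; ($\backslash L$) from $\zeta_1;\Gamma\to A$ and $\Xi(\zeta_2;\Delta_1,C,\Delta_2)\to D$ infer $\Xi(\zeta_1,\zeta_2;\Delta_1,\Gamma,A\backslash C,\Delta_2)\to D$; ($\backslash R$) from $\zeta;A,\Gamma\to C$ infer $\zeta;\Gamma\to A\backslash C$; ($\cdot L$) from $\Xi(\zeta;\Delta_1,A,B,\Delta_2)\to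 D$ infer $\Xi(\zeta;\Delta_1,A\cdot B,\Delta_2)\to D$; ($\cdot R$) from $\zeta_1;\Delta\to A$, $\zeta_2;\Gamma\to B$ infer $\zeta_1,\zeta_2;\Delta,\Gamma\to A\cdot B$; ($\mathbf1L$) from $\Xi(\zeta;\Delta_1,\Delta_2)\to A$ infer $\Xi(\zeta;\Delta_1,\mathbf1,\Delta_2)\to A$; ($\vee L$) from $\Xi(\zeta;\Delta_1,A_1,\Delta_2)\to C$ and $\Xi(\zeta;\Delta_1,A_2,\Delta_2)\to C$ infer $\Xi(\zeta;\Delta_1,A_1\vee A_2,\Delta_2)\to C$; ($\vee R_i$) from $\Xi\to A_i$ infer $\Xi\to A_1\vee A_2$; ($\wedge L_i$) from $\Xi(\zeta;\Delta_1,A_i,\Delta_2)\to C$ infer $\Xi(\zeta;\Delta_1,A_1\wedge A_2,\Delta_2)\to C$; ($\wedge R$) from $\Xi\to A_1$ and $\Xi\to A_2$ infer $\Xi\to A_1\wedge A_2$; ($[]^{-1}L$) from $\Xi(\zeta;\Delta_1,A,\Delta_2)\to B$ infer $\Xi(\zeta;\Delta_1,[[]^{-1}A],\Delta_2)\to B$; ($[]^{-1}R$) from $[\Xi]\to A$ infer $\Xi\to[]^{-1}A$; ($\langle\rangle L$) from $\Xi(\zeta;\Delta_1,[A],\Delta_2)\to B$ infer $\Xi(\zeta;\Delta_1,\langle\rangle A,\Delta_2)\to B$; ($\langle\rangle R$) from $\Xi\to A$ infer $[\Xi]\to\langle\rangle A$; ($!L$) from $\Xi(\zeta,A;\Gamma_1,\Gamma_2)\to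 B$ infer $\Xi(\zeta;\Gamma_1,!A,\Gamma_2)\to B$; ($!P$) from $\Xi(\zeta;\Gamma_1,A,\Gamma_2)\to B$ infer $\Xi(\zeta,A;\Gamma_1,\Gamma_2)\to B$; ($!R$) from $!A\to B$ infer $!A\to!B$; ($!C$) from $\Xi(\zeta,A;\Gamma_1,[A;\Gamma_2],\Gamma_3)\to B$ infer $\Xi(\zeta,A;\Gamma_1,[[\Gamma_2]],\Gamma_3)\to B$. Stoup-free calculus $\mathcal{F}_{2018}$: meta-formulae are finite sequences of tree terms; rules are the stoup-free versions of the rules above other than $!L,!P,!R,!C$ (drop all stoups), together with ($!L$) from $\Xi(\Delta_1,A,\Delta_2)\to C$ infer $\Xi(\Delta_1,!A,\Delta_2)\to C$; ($!P_1$) from $\Xi(\Delta_1,!A,\Phi,\Delta_2)\to C$ infer $\Xi(\Delta_1,\Phi,!A,\Delta_2)\to C$; ($!P_2$) the converse; ($!R$) from $!A\to B$ infer $!A\to!B$; ($!C$) from $\Xi(!A,\Gamma_1,[!A,\Gamma_2],\Gamma_3)\to C$ infer $\Xi(!A,\Gamma_1,[[\Gamma_2]],\Gamma_3)\to C$; and the cut rule: from $\Pi\to A$ and $\Xi(\Gamma_1,A,\Gamma_2)\to C$ infer $\Xi(\Gamma_1,\Pi,\Gamma_2)\to C$. *)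

(* Defs.v *)
From Stdlib Require Import List Permutation.
Import ListNotations.
Set Implicit Arguments.

Inductive form : Type :=
| Var   : nat -> form
| One   : form
| Under : form -> form -> form   (* Under A C  =  A \ C *)
| Over  : form -> form -> form   (* Over C B   =  C / B *)
| Prod  : form -> form -> form
| Meet  : form -> form -> form
| Join  : form -> form -> form
| Diam  : form -> form
| BInv  : form -> form
| Bang  : form -> form.

(* A stoup is a finite multiset of formulae, represented by a list; lists
   that are permutations of each other denote the same stoup (see [meq] and
   the rule [M_stoup_perm] below).  A tree term is a formula or a bracketed
   meta-formula [z ; G]. *)
Definition stoup := list form.

Inductive tterm : Type :=
| TF : form -> tterm
| TB : stoup -> list tterm -> tterm.

Definition mform : Type := (stoup * list tterm)%type.

Inductive teq : tterm -> tterm -> Prop :=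
| teq_F : forall A, teq (TF A) (TF A)
| teq_B : forall z z' G G', Permutation z z' -> Forall2 teq G G' ->
    teq (TB z G) (TB z' G').

Definition meq (m m' : mform) : Prop :=
  Permutation (fst m) (fst m') /\ Forall2 teq (snd m) (snd m').

(* Contexts Xi( ) : the hole is Xi itself or the content of a bracket at
   any depth. *)
Inductive mctx : Type :=
| MHole : mctx
| MIn : stoup -> list tterm -> mctx -> list tterm -> mctx.

Fixpoint mplug (c : mctx) (m : mform) : mform :=
  match c with
  | MHole => m
  | MIn z G1 c' G2 => (z, G1 ++ [TB (fst (mplug c' m)) (snd (mplug c' m))] ++ G2)
  end.

Inductive derM : mform -> form -> Prop :=
| M_ax : forall A, derM ([], [TF A]) A
| M_oneR : derM ([], []) One
| M_overL : forall c z1 z2 G D1 D2 B C D,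
    derM (z1, G) B ->
    derM (mplug c (z2, D1 ++ [TF C] ++ D2)) D ->
    derM (mplug c (z1 ++ z2, D1 ++ [TF (Over C B)] ++ G ++ D2)) D
| M_overR : forall z G B C,
    derM (z, G ++ [TF B]) C -> derM (z, G) (Over C B)
| M_underL : forall c z1 z2 G D1 D2 A C D,
    derM (z1, G) A ->
    derM (mplug c (z2, D1 ++ [TF C] ++ D2)) D ->
    derM (mplug c (z1 ++ z2, D1 ++ G ++ [TF (Under A C)] ++ D2)) D
| M_underR : forall z G A C,
    derM (z, TF A :: G) C -> derM (z, G) (Under A C)
| M_prodL : forall c z D1 D2 A B D,
    derM (mplug c (z, D1 ++ [TF A; TF B] ++ D2)) D ->
    derM (mplug c (z, D1 ++ [TF (Prod A B)] ++ D2)) D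
| M_prodR : forall z1 z2 D G A B,
    derM (z1, D) A -> derM (z2, G) B -> derM (z1 ++ z2, D ++ G) (Prod A B)
| M_oneL : forall c z D1 D2 A,
    derM (mplug c (z, D1 ++ D2)) A ->
    derM (mplug c (z, D1 ++ [TF One] ++ D2)) A
| M_joinL : forall c z D1 D2 A1 A2 C,
    derM (mplug c (z, D1 ++ [TF A1] ++ D2)) C ->
    derM (mplug c (z, D1 ++ [TF A2] ++ D2)) C ->
    derM (mplug c (z, D1 ++ [TF (Join A1 A2)] ++ D2)) C
| M_joinR1 : forall m A1 A2, derM m A1 -> derM m (Join A1 A2)
| M_joinR2 : forall m A1 A2, derM m A2 -> derM m (Join A1 A2)
| M_meetL1 : forall c z D1 D2 A1 A2 C,
    derM (mplug c (z, D1 ++ [TF A1] ++ D2)) C ->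
    derM (mplug c (z, D1 ++ [TF (Meet A1 A2)] ++ D2)) C
| M_meetL2 : forall c z D1 D2 A1 A2 C,
    derM (mplug c (z, D1 ++ [TF A2] ++ D2)) C ->
    derM (mplug c (z, D1 ++ [TF (Meet A1 A2)] ++ D2)) C
| M_meetR : forall m A1 A2, derM m A1 -> derM m A2 -> derM m (Meet A1 A2)
| M_binvL : forall c z D1 D2 A B,
    derM (mplug c (z, D1 ++ [TF A] ++ D2)) B ->
    derM (mplug c (z, D1 ++ [TB [] [TF (BInv A)]] ++ D2)) B
| M_binvR : forall z G A,
    derM ([], [TB z G]) A -> derM (z, G) (BInv A)
| M_diamL : forall c z D1 D2 A B,
    derM (mplug c (z, D1 ++ [TB [] [TF A]] ++ D2)) B ->
    derM (mplug c (z, D1 ++ [TF (Diam A)] ++ D2)) B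
| M_diamR : forall z G A,
    derM (z, G) A -> derM ([], [TB z G]) (Diam A)
| M_bangL : forall c z G1 G2 A B,
    derM (mplug c (z ++ [A], G1 ++ G2)) B ->
    derM (mplug c (z, G1 ++ [TF (Bang A)] ++ G2)) B
| M_bangP : forall c z G1 G2 A B,
    derM (mplug c (z, G1 ++ [TF A] ++ G2)) B ->
    derM (mplug c (z ++ [A], G1 ++ G2)) B
| M_bangR : forall A B,
    derM ([], [TF (Bang A)]) B -> derM ([], [TF (Bang A)]) (Bang B)
| M_bangC : forall c z G1 G2 G3 A B,
    derM (mplug c (z ++ [A], G1 ++ [TB [A] G2] ++ G3)) B ->
    derM (mplug c (z ++ [A], G1 ++ [TB [] [TB [] G2]] ++ G3)) B
(* stoups are multisets: sequents equal up to reordering of stoups (at any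
   depth) are identified *)
| M_stoup_perm : forall m m' C, meq m m' -> derM m C -> derM m' C.

Inductive fterm : Type :=
| FF : form -> fterm
| FB : list fterm -> fterm.

Inductive fctx : Type :=
| FHole : fctx
| FIn : list fterm -> fctx -> list fterm -> fctx.

Fixpoint fplug (c : fctx) (G : list fterm) : list fterm :=
  match c with
  | FHole => G
  | FIn G1 c' G2 => G1 ++ [FB (fplug c' G)] ++ G2
  end.

Inductive derF : list fterm -> form -> Prop :=
| F_ax : forall A, derF [FF A] A
| F_oneR : derF [] One
| F_overL : forall c G D1 D2 B C D,
    derF G B -> derF (fplug c (D1 ++ [FF C] ++ D2)) D ->
    derF (fplug c (D1 ++ [FF (Over C B)] ++ G ++ D2)) D
| F_overR : forall G B C, derF (G ++ [FF B]) C -> derF G (Over C B)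
| F_underL : forall c G D1 D2 A C D,
    derF G A -> derF (fplug c (D1 ++ [FF C] ++ D2)) D ->
    derF (fplug c (D1 ++ G ++ [FF (Under A C)] ++ D2)) D
| F_underR : forall G A C, derF (FF A :: G) C -> derF G (Under A C)
| F_prodL : forall c D1 D2 A B D,
    derF (fplug c (D1 ++ [FF A; FF B] ++ D2)) D ->
    derF (fplug c (D1 ++ [FF (Prod A B)] ++ D2)) D
| F_prodR : forall D G A B, derF D A -> derF G B -> derF (D ++ G) (Prod A B)
| F_oneL : forall c D1 D2 A,
    derF (fplug c (D1 ++ D2)) A -> derF (fplug c (D1 ++ [FF One] ++ D2)) A
| F_joinL : forall c D1 D2 A1 A2 C,
    derF (fplug c (D1 ++ [FF A1] ++ D2)) C ->
    derF (fplug c (D1 ++ [FF A2] ++ D2)) C ->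
    derF (fplug c (D1 ++ [FF (Join A1 A2)] ++ D2)) C
| F_joinR1 : forall G A1 A2, derF G A1 -> derF G (Join A1 A2)
| F_joinR2 : forall G A1 A2, derF G A2 -> derF G (Join A1 A2)
| F_meetL1 : forall c D1 D2 A1 A2 C,
    derF (fplug c (D1 ++ [FF A1] ++ D2)) C ->
    derF (fplug c (D1 ++ [FF (Meet A1 A2)] ++ D2)) C
| F_meetL2 : forall c D1 D2 A1 A2 C,
    derF (fplug c (D1 ++ [FF A2] ++ D2)) C ->
    derF (fplug c (D1 ++ [FF (Meet A1 A2)] ++ D2)) C
| F_meetR : forall G A1 A2, derF G A1 -> derF G A2 -> derF G (Meet A1 A2)
| F_binvL : forall c D1 D2 A B,
    derF (fplug c (D1 ++ [FF A] ++ D2)) B ->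
    derF (fplug c (D1 ++ [FB [FF (BInv A)]] ++ D2)) B
| F_binvR : forall G A, derF [FB G] A -> derF G (BInv A)
| F_diamL : forall c D1 D2 A B,
    derF (fplug c (D1 ++ [FB [FF A]] ++ D2)) B ->
    derF (fplug c (D1 ++ [FF (Diam A)] ++ D2)) B
| F_diamR : forall G A, derF G A -> derF [FB G] (Diam A)
| F_bangL : forall c D1 D2 A C,
    derF (fplug c (D1 ++ [FF A] ++ D2)) C ->
    derF (fplug c (D1 ++ [FF (Bang A)] ++ D2)) C
| F_bangP1 : forall c D1 P D2 A C,
    derF (fplug c (D1 ++ [FF (Bang A)] ++ P ++ D2)) C ->
    derF (fplug c (D1 ++ P ++ [FF (Bang A)] ++ D2)) C
| F_bangP2 : forall c D1 P D2 A C,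
    derF (fplug c (D1 ++ P ++ [FF (Bang A)] ++ D2)) C ->
    derF (fplug c (D1 ++ [FF (Bang A)] ++ P ++ D2)) C
| F_bangR : forall A B, derF [FF (Bang A)] B -> derF [FF (Bang A)] (Bang B)
| F_bangC : forall c G1 G2 G3 A C,
    derF (fplug c (FF (Bang A) :: G1 ++ [FB (FF (Bang A) :: G2)] ++ G3)) C ->
    derF (fplug c (FF (Bang A) :: G1 ++ [FB [FB G2]] ++ G3)) C
| F_cut : forall c P G1 G2 A C,
    derF P A -> derF (fplug c (G1 ++ [FF A] ++ G2)) C ->
    derF (fplug c (G1 ++ P ++ G2)) C.

Inductive stoup_free : tterm -> Prop :=
| sf_F : forall A, stoup_free (TF A)
| sf_B : forall G, Forall stoup_free G -> stoup_free (TB [] G).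

Fixpoint erase (t : tterm) : fterm :=
  match t with
  | TF A => FF A
  | TB _ G => FB (map erase G)
  end.

(* Main.v *)
Require Import Defs.
From Stdlib Require Import List Permutation.
Import ListNotations.

Notation bangs z := (map (fun A => FF (Bang A)) z).

Fixpoint trt (t : tterm) : fterm :=
  match t with
  | TF A => FF A
  | TB z G => FB (bangs z ++ map trt G)
  end.

Definition trm (m : mform) : list fterm := bangs (fst m) ++ map trt (snd m).

Fixpoint trc (c : mctx) : fctx :=
  match c with
  | MHole => FHole
  | MIn z G1 c' G2 => FIn (bangs z ++ map trt G1) (trc c') (map trt G2)
  end.

Lemma tr_plug : forall c m, trm (mplug c m) = fplug (trc c) (trm m).
Proof.
  induction c; intros m; simpl; auto.
  unfold trm in *; simpl. rewrite map_app. simpl. rewrite <- IHc.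
  rewrite <- ?app_assoc. reflexivity.
Qed.

Fixpoint fcomp (c d : fctx) : fctx :=
  match c with
  | FHole => d
  | FIn G1 c' G2 => FIn G1 (fcomp c' d) G2
  end.

Lemma fplug_comp : forall c d W, fplug (fcomp c d) W = fplug c (fplug d W).
Proof. induction c; intros; simpl; auto. rewrite IHc; auto. Qed.

Ltac norm := repeat (simpl in *; rewrite ?map_app, <- ?app_assoc in *).

Lemma move_right : forall c z X P W C,
  derF (fplug c (X ++ bangs z ++ P ++ W)) C ->
  derF (fplug c (X ++ P ++ bangs z ++ W)) C.
Proof.
  induction z as [|a z IH]; intros X P W C H; simpl in *; auto.
  specialize (IH (X ++ [FF (Bang a)]) P W C).
  rewrite <- ?app_assoc in IH. simpl in IH.
  specialize (IH H).
  pose proof (@F_bangP1 c X P (bangs z ++ W) a C) as H2.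
  simpl in H2. rewrite <- ?app_assoc in H2. simpl in H2. auto.
Qed.



Lemma move_left : forall c z X P W C,
  derF (fplug c (X ++ P ++ bangs z ++ W)) C ->
  derF (fplug c (X ++ bangs z ++ P ++ W)) C.
Proof.
  induction z as [|a z IH]; intros X P W C H; simpl in *; auto.
  pose proof (@F_bangP2 c X P (bangs z ++ W) a C) as H2.
  simpl in H2. specialize (H2 H).
  specialize (IH (X ++ [FF (Bang a)]) P W C).
  rewrite <- ?app_assoc in IH. simpl in IH. auto.
Qed.

Lemma perm_bangs : forall z z', Permutation z z' -> forall c X Y C,
  derF (fplug c (X ++ bangs z ++ Y)) C -> derF (fplug c (X ++ bangs z' ++ Y)) C.
Proof.
  induction 1; intros c X Y C Hd; auto.
  - specialize (IHPermutation c (X ++ [FF (Bang x)]) Y C).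
    rewrite <- ?app_assoc in IHPermutation. simpl in *. auto.
  - pose proof (@F_bangP1 c X [FF (Bang x)] (bangs l ++ Y) y C) as H2.
    simpl in *. auto.
Qed.

Lemma teq_ind' (P : tterm -> tterm -> Prop) :
  (forall A, P (TF A) (TF A)) ->
  (forall z z' G G', Permutation z z' -> Forall2 P G G' -> P (TB z G) (TB z' G')) ->
  forall t t', teq t t' -> P t t'.
Proof.
  intros HF HB. fix IH 3. intros t t' H. destruct H as [A|z z' G G' Hp HG].
  - apply HF.
  - apply HB; auto. induction HG; constructor; auto.
Qed.

Definition Pt (t t' : tterm) : Prop := forall c X Y C,
  derF (fplug c (X ++ trt t :: Y)) C -> derF (fplug c (X ++ trt t' :: Y)) C.

Lemma list_lemma : forall G G', Forall2 Pt G G' -> forall c X Y C,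
  derF (fplug c (X ++ map trt G ++ Y)) C -> derF (fplug c (X ++ map trt G' ++ Y)) C.
Proof.
  induction 1; intros c X Y C H'; simpl in *; auto.
  apply H in H'.
  specialize (IHForall2 c (X ++ [trt y]) Y C).
  rewrite <- ?app_assoc in IHForall2. simpl in *. auto.
Qed.

Lemma teq_lemma : forall t t', teq t t' -> Pt t t'.
Proof.
  apply teq_ind'.
  - unfold Pt; auto.
  - intros z z' G G' Hp HG c X Y C H.
    assert (E : forall W, fplug c (X ++ FB W :: Y) = fplug (fcomp c (FIn X FHole Y)) W).
    { intros W. rewrite fplug_comp. reflexivity. }
    simpl in *. rewrite E in *.
    pose proof (perm_bangs _ _ Hp (fcomp c (FIn X FHole Y)) [] (map trt G) C) as H1.
    simpl in H1. specialize (H1 H).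
    pose proof (list_lemma _ _ HG (fcomp c (FIn X FHole Y)) (bangs z') [] C) as H2.
    rewrite !app_nil_r in H2. auto.
Qed.

Lemma meq_lemma : forall m m' C, meq m m' -> derF (trm m) C -> derF (trm m') C.
Proof.
  intros [z G] [z' G'] C [Hp HG] H. simpl in *. unfold trm in *. simpl in *.
  pose proof (perm_bangs _ _ Hp FHole [] (map trt G) C) as H1. simpl in H1.
  specialize (H1 H).
  assert (HG' : Forall2 Pt G G').
  { clear H H1. induction HG; constructor; auto. apply teq_lemma; auto. }
  pose proof (list_lemma _ _ HG' FHole (bangs z') [] C) as H2.
  rewrite !app_nil_r in H2. simpl in H2. auto.
Qed.

Lemma main : forall m C, derM m C -> derF (trm m) C.
Proof.
  induction 1; rewrite ?tr_plug in *; unfold trm in *; norm.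
  - apply F_ax.
  - apply F_oneR.
  - pose proof (@F_overL (trc c) (bangs z1 ++ map trt G) (bangs z2 ++ map trt D1) (map trt D2) B C D IHderM1) as H1.
    pose proof (move_left (trc c) z1 [] (bangs z2 ++ map trt D1 ++ [FF (Over C B)]) (map trt G ++ map trt D2) D) as H2.
    norm. auto.
  - apply F_overR. norm. auto.
  - pose proof (@F_underL (trc c) (bangs z1 ++ map trt G) (bangs z2 ++ map trt D1) (map trt D2) A C D IHderM1) as H1.
    pose proof (move_left (trc c) z1 [] (bangs z2 ++ map trt D1) (map trt G ++ FF (Under A C) :: map trt D2) D) as H2.
    norm. auto.
  - apply F_underR.
    pose proof (move_right FHole z [] [FF A] (map trt G) C) as H1. norm. auto.
  - pose proof (@F_prodL (trc c) (bangs z ++ map trt D1) (map trt D2) A B D) as H1. norm. auto.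
  - pose proof (@F_prodR _ _ _ _ IHderM1 IHderM2) as H1.
    pose proof (move_left FHole z2 (bangs z1) (map trt D) (map trt G) (Prod A B)) as H2.
    norm. auto.
  - pose proof (@F_oneL (trc c) (bangs z ++ map trt D1) (map trt D2) A) as H1. norm. auto.
  - pose proof (@F_joinL (trc c) (bangs z ++ map trt D1) (map trt D2) A1 A2 C) as H1. norm. auto.
  - apply F_joinR1; auto.
  - apply F_joinR2; auto.
  - pose proof (@F_meetL1 (trc c) (bangs z ++ map trt D1) (map trt D2) A1 A2 C) as H1. norm. auto.
  - pose proof (@F_meetL2 (trc c) (bangs z ++ map trt D1) (map trt D2) A1 A2 C) as H1. norm. auto.
  - apply F_meetR; auto.
  - pose proof (@F_binvL (trc c) (bangs z ++ map trt D1) (map trt D2) A B) as H1. norm. auto.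
  - apply F_binvR; auto.
  - pose proof (@F_diamL (trc c) (bangs z ++ map trt D1) (map trt D2) A B) as H1. norm. auto.
  - apply F_diamR; auto.
  - pose proof (move_right (trc c) [A] (bangs z) (map trt G1) (map trt G2) B) as H1. norm. auto.
  - pose proof (@F_bangL (trc c) (bangs z ++ map trt G1) (map trt G2) A B) as H1.
    pose proof (move_left (trc c) [A] (bangs z) (map trt G1) (map trt G2) B) as H2.
    norm. auto.
  - apply F_bangR; auto.
  - pose proof (move_left (trc c) [A] [] (bangs z) (map trt G1 ++ FB (FF (Bang A) :: map trt G2) :: map trt G3) B) as H1.
    pose proof (@F_bangC (trc c) (bangs z ++ map trt G1) (map trt G2) (map trt G3) A B) as H2.
    pose proof (move_right (trc c) [A] [] (bangs z) (map trt G1 ++ FB [FB (map trt G2)] :: map trt G3) B) as H3.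
    norm. auto.
  - eapply meq_lemma; eauto.
Qed.

Lemma sf_trt : forall t, stoup_free t -> trt t = erase t.
Proof.
  fix IH 2. intros t H. destruct H as [A|G HG].
  - reflexivity.
  - simpl. f_equal. induction HG; simpl; auto. rewrite IH by auto. f_equal. auto.
Qed.

Theorem proposition3 : forall (G : list tterm) (C : form),
  Forall stoup_free G ->
  derM ([], G) C ->
  derF (map erase G) C.
Proof.
  intros G C HG H. apply main in H. unfold trm in H. simpl in H.
  assert (E : map trt G = map erase G).
  { clear H. induction HG; simpl; auto. rewrite sf_trt by auto. f_equal; auto. }
  rewrite <- E. exact H.
Qed.
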